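(* Let $\kappa \geq 2$ be an integer. If there exists a finite projective plane of order $\kappa$, then there exists a complete set of $\kappa - 1$ mutually projective Latin squares of order $\kappa$.
   Context: A geometry is a pair $(\mathcal{P},\mathcal{L})$ of disjoint sets, the elements of $\mathcal{L}$ (lines) being subsets of $\mathcal{P}$ (points), such that every two distinct points lie in exactly one common line and every line contains at least two points. A finite projective plane is a finite geometry in which any two different lines intersect and which contains at least four points no three of which lie on a common line. In a finite projective plane all lines have the same number $k$ of points; the order of the plane is $\kappa = k - 1$. A Latin square of order $\kappa$ is a $\kappa\times\kappa$ matrix with entries from $\{1,\dots,\kappa\}$ in which each symbol occurs exactly once in each row and each column. Two Latin squares $L_1=[l^{(1)}_{ij}]$ and $L_2=[l^{(2)}_{ij}]$ of order $\kappa$ are called projective if both have all diagonal entries equal to $1$ and, for every row index $r$ and every row index $s$, there is exactly one column index $c$ with $l^{(1)}_{rc} = l^{(2)}_{sc}$. A family of Latin squares of order $\kappa$ is a set of mutually projective Latin squares (MPLS) if its members are pairwise projective; such a set is complete if it contains $\kappa - 1$ Latin squares. *)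

(* Defs.v *)
From mathcomp Require Import all_boot all_order all_algebra.
Set Implicit Arguments. Unset Strict Implicit. Unset Printing Implicit Defensive.

Definition is_geometry (P : finType) (L : {set {set P}}) : Prop :=
  (forall p q : P, p != q -> exists! l : {set P}, [/\ l \in L, p \in l & q \in l]) /\
  (forall l, l \in L -> 2 <= #|l|).

Definition is_projective_plane (P : finType) (L : {set {set P}}) : Prop :=
  [/\ is_geometry L,
      (forall l m, l \in L -> m \in L -> l != m -> exists p, p \in l /\ p \in m)
    & exists S : {set P}, #|S| = 4 /\ (forall l, l \in L -> #|S :&: l| <= 2)].

Definition projective_plane_of_order (kappa : nat) (P : finType) (L : {set {set P}}) : Prop :=
  is_projective_plane L /\ (forall l, l \in L -> #|l| = kappa.+1).

Definition latin_square (kappa : nat) (A : 'M[nat]_kappa) : Prop :=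
  [/\ (forall i j, 1 <= A i j <= kappa),
      (forall i s, 1 <= s <= kappa -> exists! j, A i j = s)
    & (forall j s, 1 <= s <= kappa -> exists! i, A i j = s)].

Definition projective_pair (kappa : nat) (A B : 'M[nat]_kappa) : Prop :=
  (forall i, A i i = 1) /\ (forall i, B i i = 1) /\
  (forall r s : 'I_kappa, exists! c, A r c = B s c).

Definition MPLS (kappa : nat) (F : seq 'M[nat]_kappa) : Prop :=
  [/\ uniq F,
      (forall A, A \in F -> latin_square A)
    & (forall A B, A \in F -> B \in F -> A != B -> projective_pair A B)].

Definition complete_MPLS (kappa : nat) (F : seq 'M[nat]_kappa) : Prop :=
  MPLS F /\ size F = kappa - 1.

(* Main.v *)
Require Import Defs.
From mathcomp Require Import all_boot all_order all_algebra perm zify.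
Set Implicit Arguments. Unset Strict Implicit. Unset Printing Implicit Defensive.

Lemma ex1_ext (T : Type) (A B : T -> Prop) :
  (forall x, A x <-> B x) -> (exists! x, A x) -> exists! x, B x.
Proof.
move=> e [x [Ax U]]; exists x; split; first by apply/e.
by move=> y /e; apply: U.
Qed.

Lemma bij_onto (T : finType) (A : {set T}) (n : nat) (s0 : T) (i0 : 'I_n) :
  #|A| = n -> s0 \in A ->
  exists g : 'I_n -> T, [/\ injective g, forall i, g i \in A,
     forall y, y \in A -> exists i, g i = y & g i0 = s0].
Proof.
move=> cA sA.
have us : uniq (enum A) := enum_uniq _.
have ss : size (enum A) = n by rewrite -cardE.
have kn : index s0 (enum A) < n by rewrite -ss index_mem mem_enum.
pose k := Ordinal kn.
exists (fun i => nth s0 (enum A) (tperm i0 k i)); split.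
- move=> i j /eqP; rewrite nth_uniq ?ss // => /eqP /val_inj /perm_inj //.
- by move=> i; rewrite -mem_enum mem_nth // ss.
- move=> y yA.
  have jn : index y (enum A) < n by rewrite -ss index_mem mem_enum.
  exists (tperm i0 k (Ordinal jn)); rewrite tpermK /= nth_index //.
  by rewrite mem_enum.
- by rewrite tpermL /= nth_index // mem_enum.
Qed.

Lemma cardD1k (T : finType) (A : {set T}) a k : a \in A -> #|A| = k.+1 -> #|A :\ a| = k.
Proof. by move=> aA cA; move: (cardsD1 a A); rewrite aA cA add1n => -[]. Qed.

Section Geo.
Variable P : finType.
Variable L : {set {set P}}.
Hypothesis juniq : forall p q : P, p != q ->
  exists! l : {set P}, [/\ l \in L, p \in l & q \in l].
Hypothesis mex : forall l m, l \in L -> m \in L -> l != m ->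
  exists p, p \in l /\ p \in m.

Lemma line_eq (l m : {set P}) (p q : P) : l \in L -> m \in L -> p != q -> p \in l -> q \in l ->
  p \in m -> q \in m -> l = m.
Proof.
move=> lL mL pq pl ql pm qm.
case: (juniq pq) => l0 [_ U].
have e1 : l0 = l by apply: U; split.
have e2 : l0 = m by apply: U; split.
by rewrite -e1 e2.
Qed.

Lemma two_pts (l m : {set P}) (p q : P) : l \in L -> m \in L -> l != m -> p \in l -> q \in l ->
  p \in m -> q \in m -> p = q.
Proof.
move=> lL mL lm pl ql pm qm; apply/eqP; apply: contraNT lm => pq.
by apply/eqP; apply: (line_eq lL mL pq).
Qed.

Definition join (p q : P) : {set P} :=
  odflt set0 [pick l in L | (p \in l) && (q \in l)].

Lemma joinP p q : p != q -> [/\ join p q \in L, p \in join p q & q \in join p q].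
Proof.
move=> pq; rewrite /join; case: pickP => [l /andP[lL /andP[pl ql]] | H0] //=.
case: (juniq pq) => l [[lL pl ql] _].
by move: (H0 l); rewrite lL pl ql.
Qed.

Lemma join_eq (p q : P) (l : {set P}) : p != q -> l \in L -> p \in l -> q \in l -> join p q = l.
Proof.
move=> pq lL pl ql; case: (joinP pq) => jL pj qj.
exact: (line_eq jL lL pq).
Qed.

Variable x0 : P.

Definition meet (l m : {set P}) : P := odflt x0 [pick p in l :&: m].

Lemma meetP l m : l \in L -> m \in L -> l != m -> meet l m \in l /\ meet l m \in m.
Proof.
move=> lL mL lm; rewrite /meet; case: pickP => [p | H0] /=.
  by rewrite inE => /andP.
case: (mex lL mL lm) => p [pl pm]; by move: (H0 p); rewrite inE pl pm.
Qed.

Lemma meet_eq (l m : {set P}) (p : P) : l \in L -> m \in L -> l != m -> p \in l -> p \in m ->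
  meet l m = p.
Proof.
move=> lL mL lm pl pm; case: (meetP lL mL lm) => a b.
exact: (two_pts lL mL lm a pl b pm).
Qed.

Lemma meetC l m : meet l m = meet m l.
Proof. by rewrite /meet setIC. Qed.

Variable li : {set P}.
Hypothesis liL : li \in L.

Lemma meet_li (l : {set P}) (D Y : P) : l \in L -> l != li -> D \in l -> D \in li -> Y \in l ->
  Y \in li -> Y = D.
Proof. move=> lL lli Dl Dli Yl Yli; exact: (two_pts lL liL lli Yl Dl Yli Dli). Qed.

Lemma joinA D X : D \in li -> X \notin li ->
  [/\ join D X \in L, D \in join D X, X \in join D X & join D X != li].
Proof.
move=> Dli Xli.
have DX : D != X by apply: contraNneq Xli => <-.
case: (joinP DX) => a b c; split => //.
by apply: contraNneq Xli => <-.
Qed.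

Lemma lines_neq (l m : {set P}) (D D' : P) : l \in L -> l != li -> D \in l -> D \in li ->
  D' \in m -> D' \in li -> D != D' -> l != m.
Proof.
move=> lL lli Dl Dli D'm D'li DD; apply/eqP => e; subst m.
by move/eqP: DD; apply; apply/esym/(meet_li lL lli Dl Dli).
Qed.

Lemma meet_aff (l m : {set P}) (D D' : P) : l \in L -> m \in L -> l != li -> m != li ->
  D \in l -> D \in li -> D' \in m -> D' \in li -> D != D' ->
  [/\ l != m, meet l m \in l, meet l m \in m & meet l m \notin li].
Proof.
move=> lL mL lli mli Dl Dli D'm D'li DD.
have lm := lines_neq lL lli Dl Dli D'm D'li DD.
case: (meetP lL mL lm) => a b; split => //.
apply/negP => Yli.
have e1 := meet_li lL lli Dl Dli a Yli.
have e2 := meet_li mL mli D'm D'li b Yli.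
by move/eqP: DD; apply; rewrite -e1 -e2.
Qed.

Variables V H : P.
Hypothesis Vli : V \in li.
Hypothesis Hli : H \in li.
Hypothesis VH : V != H.
Variable h : {set P}.
Hypothesis hL : h \in L.
Hypothesis Hh : H \in h.
Hypothesis hli : h != li.
Variable n : nat.
Variable f : 'I_n -> P.
Hypothesis f_inj : injective f.
Hypothesis f_h : forall i, f i \in h.
Hypothesis f_H : forall i, f i != H.
Hypothesis f_surj : forall y, y \in h -> y != H -> exists i, f i = y.
Variable i0 : 'I_n.
Hypothesis i00 : nat_of_ord i0 = 0.
Variable b : 'I_n -> P.
Hypothesis b_inj : injective b.
Hypothesis b_v0 : forall i, b i \in join V (f i0).
Hypothesis b_V : forall i, b i != V.
Hypothesis b_surj : forall y, y \in join V (f i0) -> y != V -> exists i, b i = y.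
Hypothesis b_i0 : b i0 = f i0.

Lemma f_aff i : f i \notin li.
Proof.
apply/negP => fli; move/eqP: (f_H i); apply.
exact: (meet_li hL hli Hh Hli (f_h i) fli).
Qed.

Lemma v0P : [/\ join V (f i0) \in L, V \in join V (f i0), f i0 \in join V (f i0)
   & join V (f i0) != li].
Proof. exact: joinA Vli (f_aff i0). Qed.

Lemma b_aff i : b i \notin li.
Proof.
case: v0P => vL Vv fv vli.
apply/negP => bli; move/eqP: (b_V i); apply.
exact: (meet_li vL vli Vv Vli (b_v0 i) bli).
Qed.

Lemma aff_neq X D : X \notin li -> D \in li -> X != D.
Proof. by move=> Xli Dli; apply: contraNneq Xli => ->. Qed.

Definition idx (y : P) : 'I_n := odflt i0 [pick j | b j == y].
Definition sym (X : P) : nat := (idx (meet (join H X) (join V (f i0)))).+1.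

Lemma idx_b j : idx (b j) = j.
Proof.
rewrite /idx; case: pickP => [j' /eqP/b_inj // | /(_ j)].
by rewrite eqxx.
Qed.

Lemma sym_of X j : X \notin li -> join H X = join H (b j) -> sym X = (nat_of_ord j).+1.
Proof.
move=> Xli e; rewrite /sym e.
case: v0P => vL Vv fv vli.
case: (joinA Hli (b_aff j)) => wL Hw bw wli.
have HV : H != V by rewrite eq_sym.
case: (meet_aff wL vL wli vli Hw Hli Vv Vli HV) => wv a c _.
by rewrite (meet_eq wL vL wv bw (b_v0 j)) idx_b.
Qed.

Lemma sym_ex X : X \notin li -> exists j, sym X = (nat_of_ord j).+1 /\ join H X = join H (b j).
Proof.
move=> Xli.
case: v0P => vL Vv fv vli.
case: (joinA Hli Xli) => wL Hw Xw wli.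
have HV : H != V by rewrite eq_sym.
case: (meet_aff wL vL wli vli Hw Hli Vv Vli HV) => wv a c d.
case: (b_surj c (aff_neq d Vli)) => j bj.
exists j; split; first by rewrite /sym -bj idx_b.
apply/esym/join_eq => //; first by rewrite eq_sym; exact: aff_neq (b_aff j) Hli.
by rewrite bj.
Qed.

Lemma sym_same X Y : X \notin li -> Y \notin li -> sym X = sym Y -> join H X = join H Y.
Proof.
move=> Xli Yli; case: (sym_ex Xli) => j [-> ->]; case: (sym_ex Yli) => k [-> ->].
by case=> /val_inj ->.
Qed.

Lemma sym_le X : 1 <= sym X <= n.
Proof. by rewrite /sym /=. Qed.

Lemma latin_key (D1 D2 : P) (m : {set P}) (j : 'I_n) : D1 \in li -> D2 \in li -> D1 != D2 -> D1 != H -> D2 != H ->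
  m \in L -> m != li -> D1 \in m ->
  exists! r, sym (meet m (join D2 (f r))) = (nat_of_ord j).+1.
Proof.
move=> D1li D2li D12 D1H D2H mL mli D1m.
case: (joinA Hli (b_aff j)) => wL Hw bw wli.
case: (meet_aff mL wL mli wli D1m D1li Hw Hli D1H) => mw Xm Xw Xli.
set X := meet m _ in Xm Xw Xli.
case: (joinA D2li Xli) => uL D2u Xu uli.
set u := join D2 X in uL D2u Xu uli.
case: (meet_aff uL hL uli hli D2u D2li Hh Hli D2H) => uh Yu Yh Yli.
case: (f_surj Yh (aff_neq Yli Hli)) => r fr.
have mu : m != u := lines_neq mL mli D1m D1li D2u D2li D12.
have ju : forall r', f r' \in u -> join D2 (f r') = u.
  move=> r' fu; apply: join_eq => //; rewrite eq_sym; exact: aff_neq (f_aff r') D2li.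
exists r; split.
  rewrite ju ?fr // (meet_eq mL uL mu Xm Xu); apply: sym_of => //.
  by apply: join_eq => //; rewrite eq_sym; exact: aff_neq Xli Hli.
move=> r' e.
case: (joinA D2li (f_aff r')) => u'L D2u' fu' u'li.
case: (meet_aff mL u'L mli u'li D1m D1li D2u' D2li D12) => mu' X'm X'u' X'li.
case: (sym_ex X'li) => k [ek jk].
have kj : k = j by apply/val_inj; move: ek; rewrite e => -[].
subst k.
have X'w : meet m (join D2 (f r')) \in join H (b j) by rewrite -jk; case: (joinA Hli X'li).
have XX := two_pts mL wL mw X'm Xm X'w Xw.
have D2X : D2 != X by rewrite eq_sym; exact: aff_neq Xli D2li.
have uu : join D2 X = join D2 (f r') by apply: join_eq => //; rewrite -XX.
apply: f_inj; apply: (two_pts uL hL uh) => //; try by rewrite fr.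
by rewrite /u uu.
Qed.

Lemma diag_one Z r : Z \in li -> Z != V -> sym (meet (join Z (f r)) (join V (f r))) = 1.
Proof.
move=> Zli ZV.
case: (joinA Zli (f_aff r)) => mL Zm fm mli.
case: (joinA Vli (f_aff r)) => vL Vv fv vli.
have mv : join Z (f r) != join V (f r) := lines_neq mL mli Zm Zli Vv Vli ZV.
rewrite (meet_eq mL vL mv fm fv).
have -> : 1 = (nat_of_ord i0).+1 by rewrite i00.
apply: sym_of; first exact: f_aff.
have Hf : forall i, H != f i by move=> i; rewrite eq_sym.
by rewrite b_i0 !(join_eq (Hf _) hL Hh (f_h _)).
Qed.

Lemma proj_key Z Z' r s : Z \in li -> Z' \in li -> Z != Z' -> Z != V -> Z' != V ->
  exists! c, sym (meet (join Z (f r)) (join V (f c))) =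
             sym (meet (join Z' (f s)) (join V (f c))).
Proof.
move=> Zli Z'li ZZ ZV Z'V.
case: (joinA Zli (f_aff r)) => mL Zm fm mli.
case: (joinA Z'li (f_aff s)) => m'L Z'm' fm' m'li.
set m := join Z (f r) in mL Zm fm mli *.
set m' := join Z' (f s) in m'L Z'm' fm' m'li *.
case: (meet_aff mL m'L mli m'li Zm Zli Z'm' Z'li ZZ) => mm' Ym Ym' Yli.
set Y := meet m m' in Ym Ym' Yli.
case: (joinA Vli Yli) => uL Vu Yu uli.
set u := join V Y in uL Vu Yu uli.
have VH' : V != H := VH.
case: (meet_aff uL hL uli hli Vu Vli Hh Hli VH') => uh Wu Wh Wli.
case: (f_surj Wh (aff_neq Wli Hli)) => c fc.
have ju : forall c', f c' \in u -> join V (f c') = u.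
  move=> c' fu; apply: join_eq => //; rewrite eq_sym; exact: aff_neq (f_aff c') Vli.
have mu : m != u := lines_neq mL mli Zm Zli Vu Vli ZV.
have m'u : m' != u := lines_neq m'L m'li Z'm' Z'li Vu Vli Z'V.
exists c; split.
  by rewrite ju ?fc // (meet_eq mL uL mu Ym Yu) (meet_eq m'L uL m'u Ym' Yu).
move=> c' e.
case: (joinA Vli (f_aff c')) => u'L Vu' fu' u'li.
case: (meet_aff mL u'L mli u'li Zm Zli Vu' Vli ZV) => mu' X1m X1u X1li.
case: (meet_aff m'L u'L m'li u'li Z'm' Z'li Vu' Vli Z'V) => m'u' X2m X2u X2li.
have jj := sym_same X1li X2li e.
case: (joinA Hli X1li) => wL Hw X1w wli.
have X2w : meet m' (join V (f c')) \in join H (meet m (join V (f c'))).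
  by rewrite jj; case: (joinA Hli X2li).
have u'w := lines_neq u'L u'li Vu' Vli Hw Hli VH'.
have X12 := two_pts u'L wL u'w X1u X2u X1w X2w.
have X1m' : meet m (join V (f c')) \in m' by rewrite X12.
have XY := two_pts mL m'L mm' X1m Ym X1m' Ym'.
have VY : V != Y by rewrite eq_sym; exact: aff_neq Yli Vli.
have uu : join V Y = join V (f c') by apply: join_eq => //; rewrite -XY.
apply: f_inj; apply: (two_pts uL hL uh) => //; try by rewrite fc.
by rewrite /u uu.
Qed.

Definition sq (Z : P) : 'M[nat]_n :=
  \matrix_(r, c) sym (meet (join Z (f r)) (join V (f c))).

Lemma s_ord s : 1 <= s <= n -> exists k : 'I_n, s = (nat_of_ord k).+1.
Proof.
case/andP=> s1 sn.
have kn : s.-1 < n by rewrite prednK.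
by exists (Ordinal kn); rewrite /= prednK.
Qed.

Lemma sq_latin Z : Z \in li -> Z != V -> Z != H -> latin_square (sq Z).
Proof.
move=> Zli ZV ZH; split.
- by move=> i j; rewrite mxE sym_le.
- move=> i s /s_ord [k ->].
  case: (joinA Zli (f_aff i)) => mL Zm fm mli.
  have := latin_key k Zli Vli ZV ZH VH mL mli Zm.
  by apply: ex1_ext => c; rewrite mxE.
- move=> j s /s_ord [k ->].
  case: (joinA Vli (f_aff j)) => mL Vm fm mli.
  have VZ : V != Z by rewrite eq_sym.
  have := latin_key k Vli Zli VZ VH ZH mL mli Vm.
  by apply: ex1_ext => c; rewrite mxE meetC.
Qed.

Lemma sq_proj Z Z' : Z \in li -> Z' \in li -> Z != Z' -> Z != V -> Z' != V ->
  projective_pair (sq Z) (sq Z').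
Proof.
move=> Zli Z'li ZZ ZV Z'V; split; last split.
- by move=> i; rewrite mxE diag_one.
- by move=> i; rewrite mxE diag_one.
- move=> r s; have := proj_key r s Zli Z'li ZZ ZV Z'V.
  by apply: ex1_ext => c; rewrite !mxE.
Qed.

Hypothesis n2 : 1 < n.
Hypothesis li_card : #|li| = n.+1.

Lemma sec_main : exists F : seq 'M[nat]_n, complete_MPLS F.
Proof.
set Zs := li :\ V :\ H.
have inZ : forall Z, Z \in Zs -> [/\ Z \in li, Z != V & Z != H].
  by move=> Z; rewrite !inE => /and3P[].
exists (map sq (enum Zs)); split; last first.
  rewrite size_map -cardE.
  have HliV : H \in li :\ V by rewrite in_setD1 Hli eq_sym VH.
  have c1 : #|li :\ V| = n.-1.+1 by rewrite (cardD1k Vli li_card) prednK // ltnW.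
  by rewrite (cardD1k HliV c1) subn1.
split.
- rewrite map_inj_in_uniq ?enum_uniq // => Z Z'.
  rewrite !mem_enum => /inZ [Zli ZV ZH] /inZ [Z'li Z'V Z'H] e.
  apply/eqP; apply/negP => /negP ZZ.
  case: (proj_key i0 i0 Zli Z'li ZZ ZV Z'V) => c [_ U].
  have i1n : 1 < n := n2.
  pose i1 := Ordinal i1n.
  have eq_all : forall c', sym (meet (join Z (f i0)) (join V (f c'))) =
      sym (meet (join Z' (f i0)) (join V (f c'))).
    move=> c'; have := congr1 (fun M : 'M[nat]_n => M i0 c') e.
    by rewrite !mxE.
  have a := U i0 (eq_all i0); have a' := U i1 (eq_all i1).
  by move: (congr1 val (etrans (esym a) a')); rewrite /= i00.
- by move=> A /mapP [Z] /[!mem_enum] /inZ [Zli ZV ZH] ->; exact: sq_latin.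
- move=> A B /mapP [Z] /[!mem_enum] /inZ [Zli ZV ZH] -> /mapP [Z'] /[!mem_enum]
    /inZ [Z'li Z'V Z'H] -> AB.
  apply: sq_proj => //; by apply: contraNneq AB => ->.
Qed.
End Geo.


Lemma nat_aux a b : a + b = 4 -> a <= 2 -> 0 < b.
Proof. lia. Qed.

Theorem mainTheorem1 (kappa : nat) (hk : 2 <= kappa) :
  (exists (P : finType) (L : {set {set P}}), projective_plane_of_order kappa L) ->
  exists F : seq 'M[nat]_kappa, complete_MPLS F.
Proof.
move=> [P [L [PP lcard]]]; move: PP; rewrite /is_projective_plane /is_geometry.
move=> PP; case: PP => GG mex SS. case: GG => juniq llen. case: SS => S [S4 Sl].
have : 0 < #|S| by rewrite S4.
case/card_gt0P => p pS.
have : 0 < #|S :\ p| by rewrite (cardD1k pS S4).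
case/card_gt0P => q; rewrite in_setD1 => /andP [qp qS].
have pq : p != q by rewrite eq_sym qp.
case: (joinP juniq pq) => liL _ _.
set li := join L p q in liL.
have lic := lcard _ liL.
have : 0 < #|li| by rewrite lic.
case/card_gt0P => V Vli.
have : 0 < #|li :\ V| by rewrite (cardD1k Vli lic); apply: leq_trans hk.
case/card_gt0P => H; rewrite in_setD1 => /andP [HV Hli].
have VH : V != H by rewrite eq_sym HV.
have : 0 < #|S :\: li|.
  apply: (nat_aux _ (Sl _ liL)); by rewrite cardsID.
case/card_gt0P => Q; rewrite in_setD => /andP [Qli QS].
have HQ : H != Q by apply: contraNneq Qli => <-.
case: (joinP juniq HQ) => hL Hh Qh.
set h := join L H Q in hL Hh Qh.
have hli : h != li by apply: contraNneq Qli => <-.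
have k0 : 0 < kappa by apply: leq_trans hk.
pose i0 : 'I_kappa := Ordinal k0.
have ch : #|h :\ H| = kappa.
  exact: cardD1k Hh (lcard _ hL).
have Qh' : Q \in h :\ H by rewrite in_setD1 Qh eq_sym HQ.
case: (bij_onto i0 ch Qh') => f [f_inj f_hH f_surj f_i0].
have f_h : forall i, f i \in h by move=> i; have := f_hH i; rewrite in_setD1 => /andP[].
have f_H : forall i, f i != H by move=> i; have := f_hH i; rewrite in_setD1 => /andP[].
have f_surj' : forall y, y \in h -> y != H -> exists i, f i = y.
  by move=> y yh yH; apply: f_surj; rewrite in_setD1 yh yH.
have Vf : V != f i0.
  apply/negP => /eqP e.
  have Vh : V \in h by rewrite e f_h.
  by move/eqP: VH; apply; apply: (two_pts juniq hL liL hli Vh Hh Vli Hli).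
case: (joinP juniq Vf) => vL Vv fv.
have cv : #|join L V (f i0) :\ V| = kappa.
  exact: cardD1k Vv (lcard _ vL).
have fv' : f i0 \in join L V (f i0) :\ V by rewrite in_setD1 fv eq_sym Vf.
case: (bij_onto i0 cv fv') => b [b_inj b_vV b_surj b_i0].
have b_v0 : forall i, b i \in join L V (f i0) by move=> i; have := b_vV i; rewrite in_setD1 => /andP[].
have b_V : forall i, b i != V by move=> i; have := b_vV i; rewrite in_setD1 => /andP[].
have b_surj' : forall y, y \in join L V (f i0) -> y != V -> exists i, b i = y.
  by move=> y yv yV; apply: b_surj; rewrite in_setD1 yv yV.
exact: (sec_main juniq mex p liL Vli Hli VH hL Hh hli f_inj f_h f_H f_surj'
          (erefl 0 : nat_of_ord i0 = 0) b_inj b_v0 b_V b_surj' b_i0 hk lic).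
Qed.
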